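(* Let $\mathbb{P}\in\triangle(\mathcal{X}\times[L])$ with marginal $\mathbb{P}_{\rm x}$ and Bayes class-posterior $\eta^\star$, let $h,h^{(\mathrm{e})}\colon\mathcal{X}\to\mathbb{R}^L$, $s\colon\mathcal{X}\to\mathbb{R}$, and $\gamma,\gamma^{(\mathrm{e})}>0$. Suppose $0\le\ell\le B$ and the partial losses satisfy $\phi_{+1}\ge0$, $\phi_{-1}\ge0$. Then $$\frac{e^{-B/\gamma}}{2\gamma^2}\mathbb{E}_{\mathbb{P}_{\rm x}}\!\big[\phi_{+1}(s(\mathsf{X}))V(\mathsf{X})\big]+\frac{e^{-B/\gamma^{(\mathrm{e})}}}{2(\gamma^{(\mathrm{e})})^2}\mathbb{E}_{\mathbb{P}_{\rm x}}\!\big[\phi_{-1}(s(\mathsf{X}))V^{(\mathrm{e})}(\mathsf{X})\big]\le \mathcal{L}_{\mathtt{J}}(s;\gamma,\gamma^{(\mathrm{e})})-\mathcal{L}_{\mathtt{M}}(s;\gamma,\gamma^{(\mathrm{e})})$$ $$\le\frac{1}{2\gamma^2}\mathbb{E}_{\mathbb{P}_{\rm x}}\!\big[\phi_{+1}(s(\mathsf{X}))V(\mathsf{X})\big]+\frac{1}{2(\gamma^{(\mathrm{e})})^2}\mathbb{E}_{\mathbb{P}_{\rm x}}\!\big[\phi_{-1}(s(\mathsf{X}))V^{(\mathrm{e})}(\mathsf{X})\big],$$ where $V(x)=\mathrm{Var}_{\mathsf{Y}\sim\eta^\star(x)}[\ell(x,\mathsf{Y},h(x))]$ and $V^{(\m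athrm{e})}(x)=\mathrm{Var}_{\mathsf{Y}\sim\eta^\star(x)}[\ell(x,\mathsf{Y},h^{(\mathrm{e})}(x))]$.
   Context: For $\mathtt{I}\in\{\mathtt{M},\mathtt{J}\}$, $\mathcal{L}_{\mathtt{I}}(s;\gamma,\gamma^{(\mathrm{e})})=\mathbb{E}_{\mathsf{X}\sim\mathbb{P}_{\rm x}}[\tilde w_{\mathtt{I}}(\mathsf{X};\gamma)\,\phi_{+1}(s(\mathsf{X}))+\tilde w^{(\mathrm{e})}_{\mathtt{I}}(\mathsf{X};\gamma^{(\mathrm{e})})\,\phi_{-1}(s(\mathsf{X}))]$, where $\tilde w_{\mathtt{M}}(x;\gamma)=\exp(-\mathbb{E}_{\mathsf{Y}\sim\eta^\star(x)}[\ell(x,\mathsf{Y},h(x))]/\gamma)$, $\tilde w_{\mathtt{J}}(x;\gamma)=\mathbb{E}_{\mathsf{Y}\sim\eta^\star(x)}[\exp(-\ell(x,\mathsf{Y},h(x))/\gamma)]$, and $\tilde w^{(\mathrm{e})}_{\mathtt{I}}$ is defined identically with $h$ replaced by $h^{(\mathrm{e})}$. Here $\ell\colon\mathcal{X}\times[L]\times\mathbb{R}^L\to\mathbb{R}$ is a loss and $\phi_{\pm1}\colon\mathbb{R}\to\mathbb{R}$ are partial losses of a binary loss. *)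

(* Defs.v *)
From HB Require Import structures.
From mathcomp Require Import all_boot all_order all_algebra.
From mathcomp Require Import all_classical all_reals all_analysis.
Set Implicit Arguments. Unset Strict Implicit. Unset Printing Implicit Defensive.
Import Order.TTheory GRing.Theory Num.Theory.
Local Open Scope ring_scope.

Section Defs.
Context {T : Type} {R : realType} {L : nat}.

Definition cexp (eta : T -> 'I_L -> R) (x : T) (f : 'I_L -> R) : R :=
  \sum_(y < L) eta x y * f y.

Definition cvar (eta : T -> 'I_L -> R) (x : T) (f : 'I_L -> R) : R :=
  cexp eta x (fun y => (f y - cexp eta x f) ^+ 2).

Definition wM (eta : T -> 'I_L -> R) (ell : T -> 'I_L -> 'rV[R]_L -> R)
  (h : T -> 'rV[R]_L) (gamma : R) (x : T) : R :=
  expR (- cexp eta x (fun y => ell x y (h x)) / gamma).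

Definition wJ (eta : T -> 'I_L -> R) (ell : T -> 'I_L -> 'rV[R]_L -> R)
  (h : T -> 'rV[R]_L) (gamma : R) (x : T) : R :=
  cexp eta x (fun y => expR (- ell x y (h x) / gamma)).
End Defs.

(* L_I(s; gamma, gamma_e) for weight constructor w (= wM or wJ) *)
Definition LossI {d : measure_display} {T : measurableType d} {R : realType}
  {L : nat} (P : probability T R)
  (w : (T -> 'I_L -> R) -> (T -> 'I_L -> 'rV[R]_L -> R) -> (T -> 'rV[R]_L) -> R -> T -> R)
  (eta : T -> 'I_L -> R) (ell : T -> 'I_L -> 'rV[R]_L -> R)
  (h he : T -> 'rV[R]_L) (phip phim : R -> R) (s : T -> R) (gamma gammae : R) : R :=
  Rintegral P setT (fun x => w eta ell h gamma x * phip (s x)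
                            + w eta ell he gammae x * phim (s x)).

(* Main.v *)
Require Import Defs.
From HB Require Import structures.
From mathcomp Require Import all_boot all_order all_algebra.
From mathcomp Require Import all_classical all_reals all_analysis.
From mathcomp Require Import measurable_realfun.
From mathcomp Require Import ring lra.
Import Order.TTheory GRing.Theory Num.Theory numFieldNormedType.Exports.
Local Open Scope ring_scope.
Set Implicit Arguments. Unset Strict Implicit.
Section S.
Context {R : realType}.

Lemma incr_deriv (f df : R -> R) : (forall x : R, is_derive x (1:R) f (df x)) ->
  (forall x, 0 <= df x) -> forall x y, x <= y -> f x <= f y.
Proof.
move=> fd dge0 x y xy.
have cf : continuous (f : R -> R).
  by move=> z; apply: (@differentiable_continuous _ R^o R^o); apply/derivable1_diffP; exact: ex_derive.
have cfi : {within `[x, y], continuous f}%classic.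
  exact: continuous_subspaceT.
have [c _ E] := MVT_segment xy (fun z _ => fd z) cfi.
by rewrite -subr_ge0 E mulr_ge0 // subr_ge0.
Qed.

Lemma g_deriv (x : R) : is_derive x (1:R) (fun a : R => expR a - 1 - a - a ^+ 2 / 2) (expR x - 1 - x).
Proof.
apply: is_derive_eq.
rewrite !scaler0 add0r subr0 -scalerDl scaler1 -mulr2n.
have -> : (2:R)^-1 *: (x *+ 2) = 2^-1 * (x *+ 2) by [].
lra.
Qed.

Definition gf (a : R) := expR a - 1 - a - a ^+ 2 / 2.
Definition kf (b : R) := 1 - expR b * (1 - b) - b ^+ 2 / 2.

Lemma gf_mono a b : a <= b -> gf a <= gf b.
Proof.
apply: (@incr_deriv gf (fun x => expR x - 1 - x)); first exact: g_deriv.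
by move=> x; have := expR_ge1Dx x; lra.
Qed.

Lemma k_deriv (x : R) : is_derive x (1:R) kf (x * (expR x - 1)).
Proof.
rewrite /kf; apply: is_derive_eq.
rewrite /GRing.scale /=.
by field.
Qed.

Lemma kf_mono a b : a <= b -> kf a <= kf b.
Proof.
apply: (@incr_deriv kf (fun x => x * (expR x - 1))); first exact: k_deriv.
move=> x; have [x0|x0] := leP 0 x.
  by apply: mulr_ge0 => //; have := expR_ge1Dx x; lra.
apply: mulr_le0; first exact: ltW.
by rewrite subr_le0 expR_le1 ltW.
Qed.

Lemma breg (c0 u v : R) : c0 <= u <= 0 -> c0 <= v <= 0 ->
  expR c0 * ((u - v) ^+ 2 / 2) <= expR u - expR v - (u - v) * expR v <= (u - v) ^+ 2 / 2.
Proof.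
move=> /andP[cu u0] /andP[cv v0].
set a := u - v.
have ua : u = v + a by rewrite /a addrC subrK.
have -> : expR u - expR v - a * expR v = expR v * (expR a - 1 - a).
  by rewrite ua expRD; ring.
have Eu : expR v * expR a = expR u by rewrite ua expRD.
have Eu1 : expR u <= 1 by rewrite expR_le1.
have Ev1 : expR v <= 1 by rewrite expR_le1.
have Ecv : expR c0 <= expR v by rewrite ler_expR.
have Ecu : expR c0 <= expR u by rewrite ler_expR.
have Ev0 := expR_ge0 v.
have Ec0 := expR_ge0 c0.
have Ea0 := expR_gt0 a.
have h1 := expR_ge1Dx a.
have a20 : 0 <= a ^+ 2 / 2 by rewrite divr_ge0 // sqr_ge0.
have EN : expR a * expR (- a) = 1 by rewrite -expRD subrr expR0.
have [a0|a0] := leP 0 a.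
  have G : a ^+ 2 / 2 <= expR a - 1 - a.
    by have := (@gf_mono 0 a a0); rewrite /gf expR0 expr0n /=; lra.
  have K : expR a - 1 - a <= expR a * (a ^+ 2 / 2).
    have H : kf (- a) <= kf 0 by apply: kf_mono; lra.
    move: H; rewrite /kf expR0 expr0n /= => H.
    have : expR a * (1 - expR (- a) * (1 - - a) - (- a) ^+ 2 / 2) <= 0.
      by apply: mulr_ge0_le0; [exact: ltW | lra].
    rewrite sqrrN; move: EN; nra.
  apply/andP; split.
    exact: ler_pM.
  apply: (le_trans (ler_wpM2l Ev0 K)).
  have -> : expR v * (expR a * (a ^+ 2 / 2)) = expR u * (a ^+ 2 / 2) by rewrite -Eu mulrA.
  by rewrite ler_piMl.
have G : expR a - 1 - a <= a ^+ 2 / 2.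
  by have := (@gf_mono a 0 (ltW a0)); rewrite /gf expR0 expr0n /=; lra.
have K : expR a * (a ^+ 2 / 2) <= expR a - 1 - a.
  have H : kf 0 <= kf (- a) by apply: kf_mono; lra.
  move: H; rewrite /kf expR0 expr0n /= => H.
  have : 0 <= expR a * (1 - expR (- a) * (1 - - a) - (- a) ^+ 2 / 2).
    by apply: mulr_ge0; [exact: ltW | lra].
  rewrite sqrrN; move: EN; nra.
apply/andP; split.
  apply: (le_trans _ (ler_wpM2l Ev0 K)).
  have -> : expR v * (expR a * (a ^+ 2 / 2)) = expR u * (a ^+ 2 / 2) by rewrite -Eu mulrA.
  by rewrite ler_wpM2r.
apply: (le_trans (ler_wpM2l Ev0 G)).
by rewrite ler_piMl.
Qed.

Lemma scal_help (l B g : R) : 0 < g -> 0 <= l <= B -> - B / g <= - l / g <= 0.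
Proof.
move=> g0 /andP[l0 lb]; have gi : 0 < g^-1 by rewrite invr_gt0.
rewrite !mulNr lerN2 oppr_le0 ler_pM2r //; apply/andP; split => //.
exact: mulr_ge0 (ltW gi).
Qed.

Lemma pointwise (L : nat) (eta l : 'I_L -> R) (g B : R) :
  (forall y, 0 <= eta y) -> \sum_(y < L) eta y = 1 ->
  (forall y, 0 <= l y <= B) -> 0 < g ->
  let m := \sum_(y < L) eta y * l y in
  let W := \sum_(y < L) eta y * expR (- l y / g) - expR (- m / g) in
  let V := \sum_(y < L) eta y * (l y - m) ^+ 2 in
  expR (- B / g) / (2 * g ^+ 2) * V <= W /\ W <= 1 / (2 * g ^+ 2) * V.
Proof.
move=> e0 e1 lB g0 m W V.
pose u y := - l y / g.
pose v := - m / g.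
have g0' : g != 0 by rewrite gt_eqF.
have m0 : 0 <= m by apply: sumr_ge0 => y _; apply: mulr_ge0 => //; case/andP: (lB y).
have mB : m <= B.
  rewrite -[B]mul1r -e1 big_distrl /=; apply: ler_sum => y _.
  by apply: ler_wpM2l => //; case/andP: (lB y).
have vE : \sum_(y < L) eta y * u y = v.
  rewrite /v (_ : - m / g = m * (- g^-1)); last by ring.
  rewrite /m big_distrl /=; apply: eq_bigr => y _; rewrite /u; ring.
have WE : W = \sum_(y < L) eta y * (expR (u y) - expR v - (u y - v) * expR v).
  have -> : \sum_(y < L) eta y * (expR (u y) - expR v - (u y - v) * expR v) =
     \sum_(y < L) (eta y * expR (u y) + eta y * (v * expR v - expR v) - (eta y * u y) * expR v).
    by apply: eq_bigr => y _; ring.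
  rewrite sumrB big_split /= -!big_distrl /= e1 vE /W /u /v; ring.
have VE : forall c, c / (2 * g ^+ 2) * V = \sum_(y < L) eta y * (c * ((u y - v) ^+ 2 / 2)).
  move=> c; rewrite /V big_distrr /=; apply: eq_bigr => y _.
  rewrite /u /v; field; exact: g0'.
rewrite WE -[1 / _ * V]/(1 / (2 * g ^+ 2) * V) VE VE; split; apply: ler_sum => y _; apply: ler_wpM2l => //.
  have cu : - B / g <= u y <= 0 by apply: scal_help.
  have cv : - B / g <= v <= 0 by apply: scal_help => //; rewrite m0 mB.
  by have /andP[H1 H2] := @breg _ _ _ cu cv.
have cu : - B / g <= u y <= 0 by apply: scal_help.
have cv : - B / g <= v <= 0 by apply: scal_help => //; rewrite m0 mB.
by have /andP[H1 H2] := @breg _ _ _ cu cv; rewrite mul1r.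
Qed.
End S.

Section M.
Context d (X : measurableType d) (R : realType) (P : probability X R).

Lemma bnd_of (g : X -> R) (M : R) : (forall x, `|g x| <= M) -> [bounded g x | x in setT].
Proof.
move=> H; rewrite /bounded_near; near=> M0 => x _ /=.
apply: le_trans (H x) _; near: M0; apply: nbhs_pinfty_ge.
exact: num_real.
Unshelve. all: by end_near. Qed.

Lemma intM (f g : X -> R) (M : R) : P.-integrable setT (EFin \o f) ->
  measurable_fun setT g -> (forall x, `|g x| <= M) ->
  P.-integrable setT (EFin \o (fun x => f x * g x)).
Proof.
move=> fi mg gb.
have := integrableMl measurableT fi mg (bnd_of gb).
apply: eq_integrable => // x _ /=; by rewrite EFinM.
Qed.

Lemma intM' (f g : X -> R) (M : R) : P.-integrable setT (EFin \o f) ->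
  measurable_fun setT g -> (forall x, `|g x| <= M) ->
  P.-integrable setT (EFin \o (fun x => g x * f x)).
Proof.
move=> fi mg gb; have := intM fi mg gb.
apply: eq_integrable => // x _ /=; by rewrite mulrC.
Qed.

Lemma intD' (f g : X -> R) : P.-integrable setT (EFin \o f) ->
  P.-integrable setT (EFin \o g) ->
  P.-integrable setT (EFin \o (fun x => f x + g x)).
Proof.
move=> fi gi; have := integrableD measurableT fi gi.
apply: eq_integrable => // x _ /=; by rewrite EFinD.
Qed.

Lemma intB' (f g : X -> R) : P.-integrable setT (EFin \o f) ->
  P.-integrable setT (EFin \o g) ->
  P.-integrable setT (EFin \o (fun x => f x - g x)).
Proof.
move=> fi gi; have := integrableB measurableT fi gi.
apply: eq_integrable => // x _ /=; by rewrite EFinN EFinD.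
Qed.

Lemma intZ' (f : X -> R) (k : R) : P.-integrable setT (EFin \o f) ->
  P.-integrable setT (EFin \o (fun x => k * f x)).
Proof.
move=> fi; have := integrableZl measurableT k fi.
apply: eq_integrable => // x _ /=; by rewrite EFinM.
Qed.

Lemma meas_cexp (L : nat) (eta : X -> 'I_L -> R) (f : X -> 'I_L -> R) :
  (forall y, measurable_fun setT (fun x => eta x y)) ->
  (forall y, measurable_fun setT (fun x => f x y)) ->
  measurable_fun setT (fun x => cexp eta x (f x)).
Proof.
move=> me mf; rewrite /cexp; apply: measurable_sum => y.
exact: measurable_funM.
Qed.

Lemma cexp_bnd (L : nat) (eta : X -> 'I_L -> R) x (f : 'I_L -> R) lo hi :
  (forall x y, 0 <= eta x y) -> (forall x, \sum_(y < L) eta x y = 1) ->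
  (forall y, lo <= f y <= hi) -> lo <= cexp eta x f <= hi.
Proof.
move=> e0 e1 fb; rewrite /cexp; apply/andP; split.
  rewrite -[lo]mul1r -(e1 x) big_distrl /=; apply: ler_sum => y _.
  by apply: ler_wpM2l => //; case/andP: (fb y).
rewrite -[hi]mul1r -(e1 x) big_distrl /=; apply: ler_sum => y _.
by apply: ler_wpM2l => //; case/andP: (fb y).
Qed.

Lemma meas_wJ (L : nat) (eta : X -> 'I_L -> R) ell (k : X -> 'rV[R]_L) g :
  (forall y, measurable_fun setT (fun x => eta x y)) ->
  (forall y, measurable_fun setT (fun x => ell x y (k x))) ->
  measurable_fun setT (wJ eta ell k g).
Proof.
move=> me ml; rewrite /wJ; apply: meas_cexp => // y.
apply: measurableT_comp; first exact: measurable_expR.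
apply: measurable_funM; last exact: measurable_cst.
exact: measurable_funN.
Qed.

Lemma meas_wM (L : nat) (eta : X -> 'I_L -> R) ell (k : X -> 'rV[R]_L) g :
  (forall y, measurable_fun setT (fun x => eta x y)) ->
  (forall y, measurable_fun setT (fun x => ell x y (k x))) ->
  measurable_fun setT (wM eta ell k g).
Proof.
move=> me ml; rewrite /wM.
apply: measurableT_comp; first exact: measurable_expR.
apply: measurable_funM; last exact: measurable_cst.
apply: measurable_funN.
exact: (meas_cexp (f := fun x y => ell x y (k x))).
Qed.

Lemma meas_cvar (L : nat) (eta : X -> 'I_L -> R) ell (k : X -> 'rV[R]_L) :
  (forall y, measurable_fun setT (fun x => eta x y)) ->
  (forall y, measurable_fun setT (fun x => ell x y (k x))) ->
  measurable_fun setT (fun x => cvar eta x (fun y => ell x y (k x))).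
Proof.
move=> me ml; rewrite /cvar.
apply: (meas_cexp (f := fun x y => (ell x y (k x) - cexp eta x (fun y => ell x y (k x))) ^+ 2)) => // y.
apply: measurable_funX; apply: measurable_funB => //.
exact: (meas_cexp (f := fun x y => ell x y (k x))).
Qed.

Lemma per_pred (L : nat) (eta : X -> 'I_L -> R) (ell : X -> 'I_L -> 'rV[R]_L -> R)
  (k : X -> 'rV[R]_L) (g B : R) (phi : X -> R) :
  (forall x y, 0 <= eta x y) ->
  (forall x, \sum_(y < L) eta x y = 1) ->
  (forall y, measurable_fun setT (fun x => eta x y)) ->
  (forall y, measurable_fun setT (fun x => ell x y (k x))) ->
  P.-integrable setT (EFin \o phi) -> 0 < g ->
  (forall x y v, 0 <= ell x y v /\ ell x y v <= B) ->
  [/\ P.-integrable setT (EFin \o (fun x => phi x * cvar eta x (fun y => ell x y (k x)))),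
      P.-integrable setT (EFin \o (fun x => wJ eta ell k g x * phi x)),
      P.-integrable setT (EFin \o (fun x => wM eta ell k g x * phi x)) &
      forall x, expR (- B / g) / (2 * g ^+ 2) * cvar eta x (fun y => ell x y (k x))
        <= wJ eta ell k g x - wM eta ell k g x /\
        wJ eta ell k g x - wM eta ell k g x <= 1 / (2 * g ^+ 2) * cvar eta x (fun y => ell x y (k x))].
Proof.
move=> e0 e1 me ml ip g0 lB.
have lB' : forall x y, 0 <= ell x y (k x) <= B.
  by move=> x y; case: (lB x y (k x)) => -> ->.
have mB : forall x, 0 <= cexp eta x (fun y => ell x y (k x)) <= B.
  by move=> x; apply: cexp_bnd.
split.
- apply: (intM (M := B ^+ 2)) => //; first exact: meas_cvar.
  move=> x; rewrite /cvar.
  have /andP[H1 H2] : 0 <= cexp eta x (fun y => (ell x y (k x) - cexp eta x (fun y => ell x y (k x))) ^+ 2) <= B ^+ 2.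
    apply: cexp_bnd => // y; case/andP: (lB' x y) => l0 lb; case/andP: (mB x) => m0 mb.
    apply/andP; split; first exact: sqr_ge0.
    nra.
  by rewrite ger0_norm.
- apply: (intM' (M := 1)) => //; first exact: meas_wJ.
  move=> x; rewrite /wJ.
  have /andP[H1 H2] : 0 <= cexp eta x (fun y => expR (- ell x y (k x) / g)) <= 1.
    apply: cexp_bnd => // y; rewrite expR_ge0 /= expR_le1.
    by case/andP: (scal_help g0 (lB' x y)).
  by rewrite ger0_norm.
- apply: (intM' (M := 1)) => //; first exact: meas_wM.
  move=> x; rewrite /wM ger0_norm ?expR_ge0 // expR_le1.
  by case/andP: (scal_help g0 (mB x)).
move=> x.
have := pointwise (e0 x) (e1 x) (lB' x) g0.
rewrite /wJ /wM /cvar /cexp /=.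
exact.
Qed.
End M.

Theorem theorem4 (d : measure_display) (X : measurableType d) (R : realType)
  (L : nat) (P : probability X R) (eta : X -> 'I_L -> R)
  (ell : X -> 'I_L -> 'rV[R]_L -> R) (h he : X -> 'rV[R]_L) (s : X -> R)
  (phip phim : R -> R) (gamma gammae B : R) :
  (forall x y, 0 <= eta x y) ->
  (forall x, \sum_(y < L) eta x y = 1) ->
  (forall y, measurable_fun setT (fun x => eta x y)) ->
  (forall y, measurable_fun setT (fun x => ell x y (h x))) ->
  (forall y, measurable_fun setT (fun x => ell x y (he x))) ->
  measurable_fun setT (phip \o s) ->
  measurable_fun setT (phim \o s) ->
  P.-integrable setT (EFin \o (phip \o s)) ->
  P.-integrable setT (EFin \o (phim \o s)) ->
  0 < gamma -> 0 < gammae ->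
  (forall x y v, 0 <= ell x y v /\ ell x y v <= B) ->
  (forall t, 0 <= phip t) -> (forall t, 0 <= phim t) ->
  let V := fun x => cvar eta x (fun y => ell x y (h x)) in
  let Ve := fun x => cvar eta x (fun y => ell x y (he x)) in
  let Ep := Rintegral P setT (fun x => phip (s x) * V x) in
  let Em := Rintegral P setT (fun x => phim (s x) * Ve x) in
  let D := LossI P wJ eta ell h he phip phim s gamma gammae
           - LossI P wM eta ell h he phip phim s gamma gammae in
  expR (- B / gamma) / (2 * gamma ^+ 2) * Ep
    + expR (- B / gammae) / (2 * gammae ^+ 2) * Em <= D /\
  D <= 1 / (2 * gamma ^+ 2) * Ep + 1 / (2 * gammae ^+ 2) * Em.
Proof.
move=> e0 e1 me mlh mlhe mps mms ips ims g0 ge0 lB pp0 pm0 V Ve Ep Em D.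
have [iV iJh iMh ptH] := per_pred e0 e1 me mlh ips g0 lB.
have [iVe iJe iMe ptE] := per_pred e0 e1 me mlhe ims ge0 lB.
rewrite -/V in iV ptH; rewrite -/Ve in iVe ptE.
set aJ := wJ eta ell h gamma; set aM := wM eta ell h gamma.
set bJ := wJ eta ell he gammae; set bM := wM eta ell he gammae.
have iA : P.-integrable setT (EFin \o (fun x => aJ x * phip (s x) + bJ x * phim (s x))).
  exact: intD'.
have iB : P.-integrable setT (EFin \o (fun x => aM x * phip (s x) + bM x * phim (s x))).
  exact: intD'.
have DE : D = Rintegral P setT (fun x => phip (s x) * (aJ x - aM x) + phim (s x) * (bJ x - bM x)).
  rewrite /D /LossI -RintegralB //; apply: eq_Rintegral => x _; rewrite /aJ /aM /bJ /bM; ring.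
have iAB : P.-integrable setT (EFin \o (fun x => phip (s x) * (aJ x - aM x) + phim (s x) * (bJ x - bM x))).
  have := intB' iA iB; apply: eq_integrable => // x _ /=.
  by rewrite /aJ /aM /bJ /bM; congr EFin; ring.
have bnd : forall c1 c2 : R,
  Rintegral P setT (fun x => c1 * (phip (s x) * V x) + c2 * (phim (s x) * Ve x)) = c1 * Ep + c2 * Em.
  move=> c1 c2; rewrite /Ep /Em -(RintegralZl c1 measurableT iV) -(RintegralZl c2 measurableT iVe).
  by rewrite -RintegralD //; exact: intZ'.
have ibnd : forall c1 c2 : R,
  P.-integrable setT (EFin \o (fun x => c1 * (phip (s x) * V x) + c2 * (phim (s x) * Ve x))).
  by move=> c1 c2; apply: intD'; exact: intZ'.
rewrite DE -!bnd; split; apply: le_Rintegral => // x _;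
  have [l1 u1] := ptH x; have [l2 u2] := ptE x.
  by apply: lerD; rewrite mulrCA; apply: ler_wpM2l.
by apply: lerD; rewrite mulrCA; apply: ler_wpM2l.
Qed.
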